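(* Fix $n\ge1$, $\tau>0$, $\beta\in(0,1)$, and use the notation of the context. For every $x\in\mathbb{R}^n$ with $|x|\le\beta R$, the total mass $\mu(x)=\int_{R-s}^{R+s}h(x,r)\,dr$ satisfies \[ \mu(x)=\big(1+O(N^{-1})\big)\frac{\beta^{N-3}}{\sqrt{\pi\tau}}\int_0^s\sigma^2\Big(1-\frac{\sigma^2+|x|^2}{2N\beta^2\tau}\Big)^{\frac{N-3}{2}}d\sigma, \] where $O(N^{-1})$ denotes a quantity bounded by a constant (possibly depending on $\beta,\tau$) times $N^{-1}$, the constant being independent of $N$ and $x$.
   Context: For $N\ge3$: $R=\sqrt{2N\tau}$, $\bar y\in\mathbb{R}^N$ with $|\bar y|=R$; for $|x|\le\beta R$, $s=s(x)=\sqrt{\beta^2R^2-|x|^2}$. $\gamma(\theta)=\gamma(N,\theta)$ is the fraction of the volume of $S^{N-1}$ contained in a geodesic ball of radius $\theta\in[0,\pi]$. For $r\in[R-s,R+s]$, the part of the sphere $\{|y|=r\}\subset\mathbb{R}^N$ inside $B_s(\bar y)$ is a spherical cap centered at $r\bar y/R$; $\theta(x,r)$ is its angular radius. $h(x,r)=r\,\gamma(\theta(x,r))$. *)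

(* Defs.v *)
From Stdlib Require Import Reals Lra List.
From Coquelicot Require Import Coquelicot.
Open Scope R_scope.

Definition normsq (x : list R) : R := fold_right (fun a acc => a * a + acc) 0 x.
Definition vnorm (x : list R) : R := sqrt (normsq x).

Definition Rad (N : nat) (tau : R) : R := sqrt (2 * INR N * tau).

Definition s_of (N : nat) (tau beta : R) (x : list R) : R :=
  sqrt (beta ^ 2 * Rad N tau ^ 2 - vnorm x ^ 2).

(* gamma(N,theta): fraction of the (surface) volume of S^{N-1} contained in a
   geodesic ball of radius theta, via the standard cap-area formula
   |cap_theta| / |S^{N-1}| = int_0^theta sin^{N-2} / int_0^pi sin^{N-2}. *)
Definition gamma (N : nat) (theta : R) : R :=
  RInt (fun phi => sin phi ^ (N - 2)) 0 theta /
  RInt (fun phi => sin phi ^ (N - 2)) 0 PI.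

(* theta(x,r): angular radius (seen from the origin) of the cap
   {|y| = r} /\ B_s(ybar), |ybar| = R.  A boundary point y of the cap has
   |y| = r, |y - ybar| = s, so by the law of cosines the angle between y and
   ybar is acos((r^2 + R^2 - s^2)/(2 r R)). *)
Definition theta (N : nat) (tau beta : R) (x : list R) (r : R) : R :=
  let Rr := Rad N tau in
  let s := s_of N tau beta x in
  acos ((r ^ 2 + Rr ^ 2 - s ^ 2) / (2 * r * Rr)).

Definition h (N : nat) (tau beta : R) (x : list R) (r : R) : R :=
  r * gamma N (theta N tau beta x r).

Definition mu (N : nat) (tau beta : R) (x : list R) : R :=
  RInt (h N tau beta x) (Rad N tau - s_of N tau beta x)
                        (Rad N tau + s_of N tau beta x).

(* beta^{N-3}/sqrt(pi tau) * int_0^s sigma^2 (1 - (sigma^2+|x|^2)/(2 N beta^2 tau))^{(N-3)/2} dsigma;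
   the base is >= 0 on [0,s], so  b^{(N-3)/2} = (sqrt b)^(N-3). *)
Definition mu_main (N : nat) (tau beta : R) (x : list R) : R :=
  beta ^ (N - 3) / sqrt (PI * tau) *
  RInt (fun sigma => sigma ^ 2 *
          sqrt (1 - (sigma ^ 2 + vnorm x ^ 2) / (2 * INR N * beta ^ 2 * tau)) ^ (N - 3))
       0 (s_of N tau beta x).

(* Main.v *)
Require Import Defs.
From Stdlib Require Import Reals Lra Lia List.
From Coquelicot Require Import Coquelicot.
Open Scope R_scope.

Definition Wal (n : nat) : R := RInt (fun t => sin t ^ n) 0 PI.

Lemma ex_RInt_cont (f : R -> R) a b : (forall x, continuous f x) -> ex_RInt f a b.
Proof. intros H; apply (ex_RInt_continuous (V:=R_CompleteNormedModule)); intros; apply H. Qed.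

Lemma cont_sinpow n x : continuous (fun t => sin t ^ n) x.
Proof. apply (ex_derive_continuous (fun t => sin t ^ n)). auto_derive; auto. Qed.

Lemma Wal_rec n : INR (S (S n)) * Wal (S (S n)) = INR (S n) * Wal n.
Proof.
  assert (H := is_RInt_derive (fun t => - (sin t ^ (S n) * cos t))
     (fun t => INR (S (S n)) * sin t ^ (S (S n)) - INR (S n) * sin t ^ n) 0 PI).
  assert (E : minus (- (sin PI ^ S n * cos PI)) (- (sin 0 ^ S n * cos 0)) = 0).
  { rewrite sin_PI, sin_0. unfold minus, plus, opp; simpl. ring. }
  assert (H1 : is_RInt (fun t => INR (S (S n)) * sin t ^ (S (S n)) - INR (S n) * sin t ^ n) 0 PI 0).
  { cut (is_RInt (fun t => INR (S (S n)) * sin t ^ (S (S n)) - INR (S n) * sin t ^ n) 0 PI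
      (minus (- (sin PI ^ S n * cos PI)) (- (sin 0 ^ S n * cos 0)))). { rewrite E; auto. }
    apply H.
    - intros x _. auto_derive; auto.
      change (match n with 0%nat => 1 | S _ => INR n + 1 end) with (INR (S n)).
      assert (Hc: cos x * cos x = 1 - sin x * sin x) by (generalize (sin2_cos2 x); unfold Rsqr; lra).
      rewrite !S_INR. simpl pow.
      set (C := cos x) in *; set (S0 := sin x) in *; set (P := S0 ^ n).
      transitivity (- (INR n + 1) * P * (C * C) + S0 * S0 * P); [ring|].
      rewrite Hc. ring.
    - intros x _. apply (ex_derive_continuous (fun t => INR (S (S n)) * sin t ^ S (S n) - INR (S n) * sin t ^ n)). auto_derive; auto. }
  apply (is_RInt_unique (V:=R_CompleteNormedModule)) in H1.
  rewrite (RInt_minus (fun t => INR (S (S n)) * sin t ^ (S (S n))) (fun t => INR (S n) * sin t ^ n)) in H1.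
  2,3: apply ex_RInt_cont; intros; apply (ex_derive_continuous (fun t => _ * sin t ^ _)); auto_derive; auto.
  rewrite (RInt_scal (fun t => sin t ^ (S (S n)))) in H1 by (apply ex_RInt_cont, cont_sinpow).
  rewrite (RInt_scal (fun t => sin t ^ n)) in H1 by (apply ex_RInt_cont, cont_sinpow).
  unfold Wal. remember (RInt (fun t => sin t ^ (S (S n))) 0 PI) as A1.
  remember (RInt (fun t => sin t ^ n) 0 PI) as A2. remember (INR (S (S n))) as k1. remember (INR (S n)) as k2.
  unfold minus, plus, opp, scal in H1; simpl in H1. unfold mult in H1; simpl in H1. lra.
Qed.

Lemma Wal0 : Wal 0 = PI.
Proof. unfold Wal. simpl. rewrite RInt_const. unfold scal; simpl; unfold mult; simpl. ring. Qed.

Lemma Wal1 : Wal 1 = 2.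
Proof.
  unfold Wal. apply is_RInt_unique.
  replace 2 with (minus (- cos PI) (- cos 0)).
  2:{ rewrite cos_PI, cos_0. unfold minus, plus, opp; simpl. ring. }
  apply (is_RInt_derive (fun t => - cos t)).
  - intros x _. auto_derive; auto. ring.
  - intros x _. apply (cont_sinpow 1).
Qed.

Lemma Wal_prod n : INR (S n) * Wal n * Wal (S n) = 2 * PI.
Proof.
  induction n.
  - rewrite Wal0, Wal1. simpl. ring.
  - rewrite Rmult_assoc, (Rmult_comm (Wal (S n))), <- Rmult_assoc, Wal_rec. lra.
Qed.

Lemma Wal_ge0 n : 0 <= Wal n.
Proof.
  unfold Wal. apply RInt_ge_0. generalize PI_RGT_0; lra. apply ex_RInt_cont, cont_sinpow.
  intros x Hx. apply pow_le. apply sin_ge_0; lra.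
Qed.

Lemma Wal_decr n : Wal (S n) <= Wal n.
Proof.
  unfold Wal. apply RInt_le. generalize PI_RGT_0; lra. 1,2: apply ex_RInt_cont, cont_sinpow.
  intros x Hx. simpl. assert (0 <= sin x) by (apply sin_ge_0; lra).
  assert (sin x <= 1) by apply SIN_bound. assert (0 <= sin x ^ n) by (apply pow_le; lra). nra.
Qed.

Definition Af (m : nat) (t : R) : R := RInt (fun phi => sin phi ^ (S m)) 0 t.

Lemma Af_derive m t : is_derive (Af m) t (sin t ^ S m).
Proof.
  apply (is_derive_RInt (V:=R_NormedModule) (fun phi => sin phi ^ S m) (Af m) 0 t).
  - apply filter_forall. intros y. apply (RInt_correct (V:=R_CompleteNormedModule)). apply ex_RInt_cont, cont_sinpow.
  - apply cont_sinpow.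
Qed.

Lemma Af_cont m t : continuous (Af m) t.
Proof. apply (ex_derive_continuous (K:=R_AbsRing) (V:=R_NormedModule)). eexists; apply Af_derive. Qed.

Lemma RInt_up_derive (g : R -> R) b t : (forall x, continuous g x) ->
  is_derive (fun y => RInt g y b) t (- g t).
Proof.
  intros Hg.
  apply (is_derive_RInt' (V:=R_NormedModule) g (fun y => RInt g y b) t b).
  - apply filter_forall. intros y. apply (RInt_correct (V:=R_CompleteNormedModule)). apply ex_RInt_cont, Hg.
  - apply Hg.
Qed.

Lemma RInt_up_cont (g : R -> R) b t : (forall x, continuous g x) ->
  continuous (fun y => RInt g y b) t.
Proof. intros Hg. apply (ex_derive_continuous (K:=R_AbsRing) (V:=R_NormedModule)). eexists; apply RInt_up_derive; auto. Qed.

Lemma der_opp x : is_derive (fun y : R => - y) x (-1).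
Proof. auto_derive; auto. Qed.

Lemma RInt_odd (f : R -> R) a : (forall x, continuous f x) -> (forall x, f (- x) = - f x) ->
  RInt f (- a) a = 0.
Proof.
  intros Hc Ho.
  assert (H := RInt_comp (V:=R_CompleteNormedModule) f (fun y => - y) (fun _ => -1) (- a) a).
  specialize (H (fun x _ => Hc _)).
  specialize (H (fun x _ => conj (der_opp x) (continuous_const _ _))).
  cbv beta in H.
  assert (E : RInt (fun y : R => scal (-1) (f (- y))) (- a) a = RInt f (- a) a).
  { apply RInt_ext. intros x _. rewrite Ho. unfold scal; simpl; unfold mult; simpl. ring. }
  assert (E2 : RInt f (- a) a = RInt f (- - a) (- a)) by (etransitivity; [symmetry; exact E| exact H]).
  rewrite Ropp_involutive in E2. clear H. rename E2 into H.
  assert (H2 := opp_RInt_swap (V:=R_CompleteNormedModule) f (- a) a (ex_RInt_cont _ _ _ Hc)).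
  unfold opp in H2; simpl in H2. lra.
Qed.

Lemma RInt_even (f : R -> R) a : (forall x, continuous f x) -> (forall x, f (- x) = f x) ->
  RInt f (- a) a = 2 * RInt f 0 a.
Proof.
  intros Hc Ho.
  assert (H := RInt_comp (V:=R_CompleteNormedModule) f (fun y => - y) (fun _ => -1) 0 a).
  specialize (H (fun x _ => Hc _)).
  specialize (H (fun x _ => conj (der_opp x) (continuous_const _ _))).
  cbv beta in H.
  assert (E : RInt (fun y : R => scal (-1) (f (- y))) 0 a = RInt (fun y => scal (-1) (f y)) 0 a).
  { apply RInt_ext. intros x _. rewrite Ho. reflexivity. }
  assert (E2 : RInt (fun y => scal (-1) (f y)) 0 a = RInt f (- 0) (- a)) by (etransitivity; [symmetry; exact E| exact H]).
  rewrite Ropp_0 in E2. clear H. rename E2 into H.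
  rewrite (RInt_scal (V:=R_CompleteNormedModule)) in H by (apply ex_RInt_cont; auto).
  rewrite <- (opp_RInt_swap (V:=R_CompleteNormedModule) f (- a) 0) in H by (apply ex_RInt_cont; auto).
  rewrite <- (RInt_Chasles (V:=R_CompleteNormedModule) f (- a) 0 a) by (apply ex_RInt_cont; auto).
  unfold scal, opp, plus in *; simpl in *; unfold mult in *; simpl in *. lra.
Qed.

Definition pp (s y : R) : R := sqrt (s ^ 2 - y ^ 2).
Definition qq (R0 s y : R) : R := sqrt (R0 ^ 2 - s ^ 2 + y ^ 2).
Definition gg (R0 s : R) (m : nat) (y : R) : R := y * pp s y ^ m / (R0 ^ S m * qq R0 s y).

Lemma qq_arg_pos R0 s y : 0 < R0 -> 0 <= s < R0 -> 0 < R0 ^ 2 - s ^ 2 + y ^ 2.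
Proof. intros. nra. Qed.

Lemma qq_pos R0 s y : 0 < R0 -> 0 <= s < R0 -> 0 < qq R0 s y.
Proof. intros. apply sqrt_lt_R0. apply qq_arg_pos; auto. Qed.

Lemma qq_sq R0 s y : 0 < R0 -> 0 <= s < R0 -> qq R0 s y * qq R0 s y = R0 ^ 2 - s ^ 2 + y ^ 2.
Proof. intros. apply sqrt_sqrt. left; apply qq_arg_pos; auto. Qed.

Lemma cont_pp_pow s m y : continuous (fun y => pp s y ^ m) y.
Proof.
  apply (continuous_comp (fun y => pp s y) (fun z => z ^ m)).
  - unfold pp. apply continuous_sqrt_comp.
    apply (ex_derive_continuous (K:=R_AbsRing) (V:=R_NormedModule)). auto_derive; auto.
  - apply (ex_derive_continuous (K:=R_AbsRing) (V:=R_NormedModule)). auto_derive; auto.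
Qed.

Lemma cont_inv_qq R0 s m y : 0 < R0 -> 0 <= s < R0 ->
  continuous (fun y => / (R0 ^ S m * qq R0 s y)) y.
Proof.
  intros HR Hs.
  apply (ex_derive_continuous (K:=R_AbsRing) (V:=R_NormedModule)). unfold qq.
  assert (0 < R0 ^ S m) by (apply pow_lt; auto).
  assert (H1 := qq_pos R0 s y HR Hs). unfold qq in H1.
  auto_derive. split. apply qq_arg_pos; auto. split; auto. apply Rgt_not_eq. apply Rmult_gt_0_compat; auto.
Qed.

Lemma gg_cont R0 s m y : 0 < R0 -> 0 <= s < R0 -> continuous (gg R0 s m) y.
Proof.
  intros HR Hs. unfold gg, Rdiv.
  apply (continuous_mult (K:=R_AbsRing) (fun y => y * pp s y ^ m) (fun y => / (R0 ^ S m * qq R0 s y))).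
  - apply (continuous_mult (K:=R_AbsRing) (fun y => y) (fun y => pp s y ^ m)).
    apply continuous_id. apply cont_pp_pow.
  - apply cont_inv_qq; auto.
Qed.

Lemma gg_odd R0 s m y : gg R0 s m (- y) = - gg R0 s m y.
Proof. unfold gg, pp, qq. replace ((- y) ^ 2) with (y ^ 2) by ring. unfold Rdiv. ring. Qed.
Lemma phi_derive R0 s y : 0 < R0 -> 0 <= s < R0 -> -s < y < s ->
  is_derive (fun y => atan (pp s y / qq R0 s y)) y (- y / (pp s y * qq R0 s y)).
Proof.
  intros HR Hs Hy.
  assert (Hp : 0 < s ^ 2 - y ^ 2) by nra.
  assert (Hq := qq_arg_pos R0 s y HR Hs).
  assert (P1 : 0 < pp s y) by (apply sqrt_lt_R0; auto).
  assert (Q1 : 0 < qq R0 s y) by (apply qq_pos; auto).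
  assert (P2 : pp s y * pp s y = s^2 - y^2) by (apply sqrt_sqrt; lra).
  assert (Q2 := qq_sq R0 s y HR Hs).
  unfold pp, qq in *.
  auto_derive;
  replace (s * (s * 1) + - (y * (y * 1))) with (s ^ 2 - y ^ 2) by ring;
  replace (R0 * (R0 * 1) - s * (s * 1) + y * (y * 1)) with (R0 ^ 2 - s ^ 2 + y ^ 2) by ring.
  repeat split; auto; lra.
  set (P := sqrt (s ^ 2 - y ^ 2)) in *. set (Q := sqrt (R0 ^ 2 - s ^ 2 + y ^ 2)) in *.
  field. repeat split; try lra.
Qed.

Lemma is_derive_eq (f : R -> R) x l l' : is_derive f x l -> l = l' -> is_derive f x l'.
Proof. intros H <-; exact H. Qed.

Lemma phi_cont R0 s y : 0 < R0 -> 0 <= s < R0 -> continuous (fun y => atan (pp s y / qq R0 s y)) y.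
Proof.
  intros HR Hs. apply continuous_atan_comp. unfold Rdiv.
  apply (continuous_mult (K:=R_AbsRing) (fun y => pp s y) (fun y => / qq R0 s y)).
  - unfold pp. apply continuous_sqrt_comp.
    apply (ex_derive_continuous (K:=R_AbsRing) (V:=R_NormedModule)). auto_derive; auto.
  - apply (ex_derive_continuous (K:=R_AbsRing) (V:=R_NormedModule)).
    assert (H1 := qq_pos R0 s y HR Hs). assert (H2 := qq_arg_pos R0 s y HR Hs). unfold qq in *.
    auto_derive. simpl in H1, H2. repeat split; auto; lra.
Qed.

Lemma sin_phi R0 s y : 0 < R0 -> 0 <= s < R0 -> -s <= y <= s ->
  sin (atan (pp s y / qq R0 s y)) = pp s y / R0.
Proof.
  intros HR Hs Hy.
  assert (Q1 : 0 < qq R0 s y) by (apply qq_pos; auto).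
  assert (P2 : pp s y * pp s y = s^2 - y^2) by (apply sqrt_sqrt; nra).
  assert (Q2 := qq_sq R0 s y HR Hs).
  rewrite sin_atan.
  assert (E : 1 + (pp s y / qq R0 s y)² = (R0 / qq R0 s y) ^ 2).
  { unfold Rsqr. field_simplify; [|lra|lra]. replace (pp s y ^ 2) with (pp s y * pp s y) by ring. replace (qq R0 s y ^ 2) with (qq R0 s y * qq R0 s y) by ring. rewrite P2, Q2. field. nra. }
  rewrite E, sqrt_pow2.
  - field. split; lra.
  - apply Rlt_le, Rdiv_lt_0_compat; auto.
Qed.

Lemma claim1 R0 s m y : 0 < R0 -> 0 <= s < R0 -> -s <= y <= s ->
  Af m (atan (pp s y / qq R0 s y)) = RInt (gg R0 s m) y s.
Proof.
  intros HR Hs Hy.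
  set (D := fun t => Af m (atan (pp s t / qq R0 s t)) - RInt (gg R0 s m) t s).
  destruct (MVT_gen D y s (fun _ => 0)) as [c [_ Hc]].
  - rewrite Rmin_left, Rmax_right by lra. intros t Ht.
    assert (Hd1 := phi_derive R0 s t HR Hs ltac:(lra)).
    assert (Hd2 := is_derive_comp (Af m) (fun y => atan (pp s y / qq R0 s y)) t _ _ (Af_derive m _) Hd1).
    assert (Hd3 := RInt_up_derive (gg R0 s m) s t (fun x => gg_cont R0 s m x HR Hs)).
    assert (Hd := is_derive_minus _ _ _ _ _ Hd2 Hd3).
    eapply is_derive_eq; [exact Hd|].
    rewrite sin_phi by (auto; lra).
    assert (P1 : 0 < pp s t) by (apply sqrt_lt_R0; nra).
    assert (Q1 : 0 < qq R0 s t) by (apply qq_pos; auto).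
    unfold minus, plus, opp, scal; simpl. unfold mult; simpl. unfold gg.
    unfold Rdiv. rewrite Rpow_mult_distr, pow_inv. simpl pow. field. repeat split; try lra.
    apply pow_nonzero; lra.
  - intros t _. apply continuity_pt_filterlim.
    apply (continuous_minus (V:=R_NormedModule) (fun t => Af m (atan (pp s t / qq R0 s t))) (fun t => RInt (gg R0 s m) t s)).
    + apply (continuous_comp (fun y => atan (pp s y / qq R0 s y)) (Af m)).
      apply phi_cont; auto. apply Af_cont.
    + apply RInt_up_cont. intros; apply gg_cont; auto.
  - assert (Es : D s = 0).
    { unfold D. unfold pp. replace (s ^ 2 - s ^ 2) with 0 by ring. rewrite sqrt_0.
      unfold Rdiv. rewrite Rmult_0_l, atan_0. unfold Af. rewrite !RInt_point. unfold zero; simpl; ring. }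
    unfold D in Es, Hc. lra.
Qed.

Definition uu (R0 s r : R) : R := (r ^ 2 + R0 ^ 2 - s ^ 2) / (2 * r * R0).
Definition th (R0 s r : R) : R := atan (sqrt (1 - (uu R0 s r)²) / uu R0 s r).
Definition rho (R0 s y : R) : R := qq R0 s y + y.
Definition drho (R0 s y : R) : R := y / qq R0 s y + 1.

Lemma rho_pos R0 s y : 0 < R0 -> 0 <= s < R0 -> 0 < rho R0 s y.
Proof.
  intros HR Hs. assert (Q1 := qq_pos R0 s y HR Hs). assert (Q2 := qq_sq R0 s y HR Hs).
  unfold rho. assert (0 < R0 ^ 2 - s ^ 2) by nra. nra.
Qed.

Lemma uu_pos R0 s r : 0 < R0 -> 0 <= s < R0 -> 0 < r -> 0 < uu R0 s r.
Proof. intros. unfold uu. apply Rdiv_lt_0_compat; nra. Qed.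

Lemma th_rho R0 s y : 0 < R0 -> 0 <= s < R0 -> -s <= y <= s ->
  th R0 s (rho R0 s y) = atan (pp s y / qq R0 s y).
Proof.
  intros HR Hs Hy.
  assert (Q1 := qq_pos R0 s y HR Hs). assert (Q2 := qq_sq R0 s y HR Hs).
  assert (P0 : 0 <= pp s y) by apply sqrt_pos.
  assert (P2 : pp s y * pp s y = s^2 - y^2) by (apply sqrt_sqrt; nra).
  assert (Hr := rho_pos R0 s y HR Hs).
  assert (U : uu R0 s (rho R0 s y) = qq R0 s y / R0).
  { unfold uu. unfold rho in *.
    replace ((qq R0 s y + y) ^ 2 + R0 ^ 2 - s ^ 2) with (2 * qq R0 s y * (qq R0 s y + y)).
    - field. lra.
    - simpl. nra. }
  unfold th. rewrite U.
  assert (E : 1 - (qq R0 s y / R0)² = (pp s y / R0) ^ 2).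
  { unfold Rsqr. field_simplify; [|lra|lra].
    replace (pp s y ^ 2) with (pp s y * pp s y) by ring.
    replace (qq R0 s y ^ 2) with (qq R0 s y * qq R0 s y) by ring. rewrite P2, Q2. field. lra. }
  rewrite E, sqrt_pow2.
  - f_equal. field. lra.
  - apply Rmult_le_pos; auto. left; apply Rinv_0_lt_compat; auto.
Qed.

Lemma rho_derive R0 s y : 0 < R0 -> 0 <= s < R0 -> is_derive (rho R0 s) y (drho R0 s y).
Proof.
  intros HR Hs. assert (Q1 := qq_pos R0 s y HR Hs). assert (Q2 := qq_arg_pos R0 s y HR Hs).
  unfold rho, drho, qq in *. simpl in Q1, Q2. auto_derive. auto. set (Q := sqrt _) in *. field. lra.
Qed.

Lemma cont_rho R0 s y : 0 < R0 -> 0 <= s < R0 -> continuous (rho R0 s) y.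
Proof.
  intros. apply (ex_derive_continuous (K:=R_AbsRing) (V:=R_NormedModule)). eexists; apply rho_derive; auto.
Qed.

Lemma cont_drho R0 s y : 0 < R0 -> 0 <= s < R0 -> continuous (drho R0 s) y.
Proof.
  intros HR Hs. assert (Q1 := qq_pos R0 s y HR Hs). assert (Q2 := qq_arg_pos R0 s y HR Hs).
  apply (ex_derive_continuous (K:=R_AbsRing) (V:=R_NormedModule)).
  unfold drho, qq in *. simpl in Q1, Q2. auto_derive. repeat split; auto; lra.
Qed.

Lemma cont_f R0 s m r : 0 < R0 -> 0 <= s < R0 -> 0 < r ->
  continuous (fun r => r * Af m (th R0 s r)) r.
Proof.
  intros HR Hs Hr.
  assert (U := uu_pos R0 s r HR Hs Hr).
  apply (continuous_mult (K:=R_AbsRing) (fun r => r) (fun r => Af m (th R0 s r))).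
  apply continuous_id.
  apply (continuous_comp (th R0 s) (Af m)); [|apply Af_cont].
  unfold th. apply continuous_atan_comp. unfold Rdiv.
  apply (continuous_mult (K:=R_AbsRing) (fun r => sqrt (1 - (uu R0 s r)²)) (fun r => / uu R0 s r)).
  - apply continuous_sqrt_comp. apply (ex_derive_continuous (K:=R_AbsRing) (V:=R_NormedModule)).
    unfold uu. auto_derive. repeat split; nra.
  - apply (ex_derive_continuous (K:=R_AbsRing) (V:=R_NormedModule)).
    unfold uu in *. auto_derive. repeat split; try nra.
Qed.

Lemma rho_end R0 s : 0 < R0 -> 0 <= s < R0 -> rho R0 s (- s) = R0 - s /\ rho R0 s s = R0 + s.
Proof.
  intros HR Hs. unfold rho, qq.
  replace (R0 ^ 2 - s ^ 2 + (- s) ^ 2) with (R0 ^ 2) by ring.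
  replace (R0 ^ 2 - s ^ 2 + s ^ 2) with (R0 ^ 2) by ring.
  rewrite sqrt_pow2 by lra. split; ring.
Qed.

Lemma cont_y2pp s m y : continuous (fun y => y ^ 2 * pp s y ^ m) y.
Proof.
  apply (continuous_mult (K:=R_AbsRing) (fun y => y ^ 2) (fun y => pp s y ^ m)).
  apply (ex_derive_continuous (K:=R_AbsRing) (V:=R_NormedModule)). auto_derive; auto.
  apply cont_pp_pow.
Qed.

Lemma Ptot R0 s m : 0 < R0 -> 0 <= s < R0 ->
  RInt (fun r => r * Af m (th R0 s r)) (R0 - s) (R0 + s)
  = 2 / R0 ^ S m * RInt (fun y => y ^ 2 * pp s y ^ m) 0 s.
Proof.
  intros HR Hs.
  destruct (rho_end R0 s HR Hs) as [E1 E2].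
  set (G := fun y => RInt (gg R0 s m) y s).
  assert (Hgc : forall x, continuous (gg R0 s m) x) by (intros; apply gg_cont; auto).
  assert (HGc : forall x, continuous G x) by (intros; apply RInt_up_cont; auto).
  assert (Hsub := RInt_comp (V:=R_CompleteNormedModule) (fun r => r * Af m (th R0 s r)) (rho R0 s) (drho R0 s) (- s) s).
  specialize (Hsub (fun x _ => cont_f R0 s m _ HR Hs (rho_pos R0 s x HR Hs))).
  specialize (Hsub (fun x _ => conj (rho_derive R0 s x HR Hs) (cont_drho R0 s x HR Hs))).
  cbv beta in Hsub. rewrite E1, E2 in Hsub. rewrite <- Hsub. clear Hsub.
  transitivity (RInt (fun y => drho R0 s y * (rho R0 s y * G y)) (- s) s).
  { apply RInt_ext. rewrite Rmin_left, Rmax_right by lra. intros y Hy.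
    unfold G. rewrite th_rho, claim1 by (auto; lra). reflexivity. }
  set (df := fun y => drho R0 s y * (rho R0 s y * G y) - rho R0 s y ^ 2 / 2 * gg R0 s m y).
  assert (Hdfc : forall y, continuous df y).
  { intros y. unfold df.
    apply (continuous_minus (V:=R_NormedModule) (fun y => drho R0 s y * (rho R0 s y * G y)) (fun y => rho R0 s y ^ 2 / 2 * gg R0 s m y)).
    - apply (continuous_mult (K:=R_AbsRing) (drho R0 s) (fun y => rho R0 s y * G y)).
      apply cont_drho; auto.
      apply (continuous_mult (K:=R_AbsRing) (rho R0 s) G). apply cont_rho; auto. auto.
    - apply (continuous_mult (K:=R_AbsRing) (fun y => rho R0 s y ^ 2 / 2) (gg R0 s m)); auto.
      apply (continuous_comp (rho R0 s) (fun z => z ^ 2 / 2)). apply cont_rho; auto.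
      apply (ex_derive_continuous (K:=R_AbsRing) (V:=R_NormedModule)). auto_derive; auto. }
  assert (Hibp : RInt df (- s) s = 0).
  { apply (is_RInt_unique (V:=R_CompleteNormedModule)).
    assert (H := is_RInt_derive (V:=R_CompleteNormedModule) (fun y => rho R0 s y ^ 2 / 2 * G y) df (- s) s).
    assert (EF : minus (rho R0 s s ^ 2 / 2 * G s) (rho R0 s (- s) ^ 2 / 2 * G (- s)) = 0).
    { unfold G. rewrite RInt_point. rewrite (RInt_odd (gg R0 s m) s Hgc (gg_odd R0 s m)).
      unfold minus, plus, opp, zero; simpl. ring. }
    rewrite <- EF. apply H.
    - intros y _.
      assert (H1 : is_derive (fun y => rho R0 s y ^ 2 / 2) y (rho R0 s y * drho R0 s y)).
      { assert (Q1 := qq_pos R0 s y HR Hs). assert (Q2 := qq_arg_pos R0 s y HR Hs).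
        unfold rho, drho, qq in *. simpl in Q1, Q2. auto_derive. auto. simpl. set (Q := sqrt _) in *. field. lra. }
      assert (H2 := RInt_up_derive (gg R0 s m) s y Hgc).
      assert (H3 := is_derive_mult _ _ _ _ _ H1 H2 Rmult_comm).
      eapply is_derive_eq; [exact H3|]. unfold df, G. unfold plus, mult; simpl. ring.
    - intros; apply Hdfc. }
  assert (Split : RInt (fun y => drho R0 s y * (rho R0 s y * G y)) (- s) s
     = RInt df (- s) s + RInt (fun y => / R0 ^ S m * (y ^ 2 * pp s y ^ m) + (R0 ^ 2 - s ^ 2 + 2 * y ^ 2) / 2 * gg R0 s m y) (- s) s).
  { assert (Hh1 : forall y, continuous (fun y => / R0 ^ S m * (y ^ 2 * pp s y ^ m)) y).
    { intros y. apply (continuous_mult (K:=R_AbsRing) (fun _ => / R0 ^ S m) (fun y => y ^ 2 * pp s y ^ m)).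
      apply continuous_const. apply cont_y2pp. }
    assert (Hh2 : forall y, continuous (fun y => (R0 ^ 2 - s ^ 2 + 2 * y ^ 2) / 2 * gg R0 s m y) y).
    { intros y. apply (continuous_mult (K:=R_AbsRing) (fun y => (R0 ^ 2 - s ^ 2 + 2 * y ^ 2) / 2) (gg R0 s m)); auto.
      apply (ex_derive_continuous (K:=R_AbsRing) (V:=R_NormedModule)). auto_derive; auto. }
    assert (Hh : forall y, continuous (fun y => / R0 ^ S m * (y ^ 2 * pp s y ^ m) + (R0 ^ 2 - s ^ 2 + 2 * y ^ 2) / 2 * gg R0 s m y) y).
    { intros y. apply (continuous_plus (V:=R_NormedModule) (fun y => / R0 ^ S m * (y ^ 2 * pp s y ^ m)) (fun y => (R0 ^ 2 - s ^ 2 + 2 * y ^ 2) / 2 * gg R0 s m y)); auto. }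
    rewrite <- (RInt_plus (V:=R_CompleteNormedModule)) by (apply ex_RInt_cont; auto).
    apply RInt_ext. intros y _. unfold df. unfold plus; simpl.
    assert (Q1 := qq_pos R0 s y HR Hs). assert (Q2 := qq_sq R0 s y HR Hs).
    assert (0 < R0 ^ S m) by (apply pow_lt; auto).
    unfold rho, gg. simpl in Q2 |- *. set (Q := qq R0 s y) in *.
    replace (R0 * (R0 * 1) - s * (s * 1) + 2 * (y * (y * 1))) with (Q * Q + y * y) by (rewrite Q2; ring).
    field. repeat split; try lra. apply pow_nonzero; lra. }
  rewrite Split, Hibp, Rplus_0_l.
  assert (Hh1 : forall y, continuous (fun y => / R0 ^ S m * (y ^ 2 * pp s y ^ m)) y).
  { intros y. apply (continuous_mult (K:=R_AbsRing) (fun _ => / R0 ^ S m) (fun y => y ^ 2 * pp s y ^ m)).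
    apply continuous_const. apply cont_y2pp. }
  assert (Hh2 : forall y, continuous (fun y => (R0 ^ 2 - s ^ 2 + 2 * y ^ 2) / 2 * gg R0 s m y) y).
  { intros y. apply (continuous_mult (K:=R_AbsRing) (fun y => (R0 ^ 2 - s ^ 2 + 2 * y ^ 2) / 2) (gg R0 s m)); auto.
    apply (ex_derive_continuous (K:=R_AbsRing) (V:=R_NormedModule)). auto_derive; auto. }
  transitivity (RInt (fun y : R => / R0 ^ S m * (y ^ 2 * pp s y ^ m)) (- s) s + RInt (fun y : R => (R0 ^ 2 - s ^ 2 + 2 * y ^ 2) / 2 * gg R0 s m y) (- s) s).
  { apply (RInt_plus (V:=R_CompleteNormedModule)); apply ex_RInt_cont; auto. }
  rewrite (RInt_odd (fun y : R => (R0 ^ 2 - s ^ 2 + 2 * y ^ 2) / 2 * gg R0 s m y) s Hh2).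
  2:{ intros y. rewrite gg_odd. replace ((- y) ^ 2) with (y ^ 2) by ring. ring. }
  rewrite (RInt_even (fun y : R => / R0 ^ S m * (y ^ 2 * pp s y ^ m)) s Hh1).
  2:{ intros y. unfold pp. replace ((- y) ^ 2) with (y ^ 2) by ring. reflexivity. }
  rewrite (RInt_scal (V:=R_CompleteNormedModule) (fun y => y ^ 2 * pp s y ^ m)) by (apply ex_RInt_cont, cont_y2pp).
  unfold plus, scal; simpl; unfold mult; simpl. field. split; [apply pow_nonzero|]; lra.
Qed.

Lemma scalR (a b : R) : scal a b = a * b.
Proof. reflexivity. Qed.

Lemma wallis_bound (m : nat) (a : R) : 0 < a -> a ^ 2 * (INR m + 3) = 2 * PI ->
  0 < Wal (S m) /\ Rabs (a / Wal (S m) - 1) <= 2 / (INR m + 3).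
Proof.
  intros Ha Ha2.
  assert (P1 := Wal_prod (S m)). assert (P0 := Wal_prod m).
  assert (D1 := Wal_decr (S m)). assert (D0 := Wal_decr m).
  assert (G2 := Wal_ge0 (S (S m))). assert (G1 := Wal_ge0 (S m)). assert (G0 := Wal_ge0 m).
  repeat rewrite S_INR in P1. repeat rewrite S_INR in P0.
  set (W := Wal (S m)) in *. set (W0 := Wal m) in *. set (W2 := Wal (S (S m))) in *.
  assert (Hk := pos_INR m). set (k := INR m) in *.
  assert (HPI := PI_RGT_0).
  assert (Wp : 0 < W).
  { destruct G1 as [G1|G1]; auto. rewrite <- G1 in P1. rewrite Rmult_0_r, Rmult_0_l in P1. lra. }
  assert (L1 : 2 * PI <= (k + 2) * W ^ 2).
  { assert (0 <= (k + 2) * W * (W - W2)) by (apply Rmult_le_pos; [apply Rmult_le_pos|]; lra). nra. }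
  assert (L2 : (k + 1) * W ^ 2 <= 2 * PI).
  { assert (0 <= (k + 1) * W * (W0 - W)) by (apply Rmult_le_pos; [apply Rmult_le_pos|]; lra). nra. }
  assert (A0 : a ^ 2 <= W ^ 2).
  { apply (Rmult_le_reg_l (k + 3)); [lra|]. assert (0 <= W ^ 2) by nra. nra. }
  assert (A1 : a <= W).
  { destruct (Rle_dec a W) as [?|Hn]; auto. assert (W < a) by lra. assert (W * W < a * a) by nra. nra. }
  assert (A2 : W * (k + 1) <= a * (k + 3)).
  { assert (Hs : (W * (k + 1)) ^ 2 <= (a * (k + 3)) ^ 2).
    { replace ((W * (k + 1)) ^ 2) with ((k + 1) * W ^ 2 * (k + 1)) by ring.
      replace ((a * (k + 3)) ^ 2) with (a ^ 2 * (k + 3) * (k + 3)) by ring. rewrite Ha2.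
      apply Rle_trans with (2 * PI * (k + 1)). apply Rmult_le_compat_r; lra. nra. }
    destruct (Rle_dec (W * (k + 1)) (a * (k + 3))) as [?|Hn]; auto.
    assert (a * (k + 3) < W * (k + 1)) by lra. assert (0 < a * (k + 3)) by nra. nra. }
  split; auto.
  rewrite Rabs_left1.
  - apply (Rmult_le_reg_r (W * (k + 3))). nra.
    field_simplify; [|lra|lra]. nra.
  - apply (Rmult_le_reg_r W); auto. field_simplify; lra.
Qed.

Theorem proposition4p3 (n : nat) (tau beta : R) :
  (1 <= n)%nat -> 0 < tau -> 0 < beta < 1 ->
  exists C : R,
    forall (N : nat) (x : list R),
      (3 <= N)%nat -> length x = n -> vnorm x <= beta * Rad N tau ->
      exists E : R,
        Rabs E <= C / INR N /\
        mu N tau beta x = (1 + E) * mu_main N tau beta x.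
Proof.
  intros Hn Ht Hb. exists 2. intros N x HN Hlen Hx.
  destruct N as [|[|[|m]]]; try lia. clear HN.
  assert (HNr : INR (S (S (S m))) = INR m + 3) by (rewrite !S_INR; ring).
  assert (Hk := pos_INR m).
  set (N := S (S (S m))) in *.
  set (Rr := Rad N tau) in *.
  assert (HR2 : Rr ^ 2 = 2 * INR N * tau) by (apply pow2_sqrt; rewrite HNr; nra).
  assert (HR : 0 < Rr) by (apply sqrt_lt_R0; rewrite HNr; nra).
  set (X := vnorm x) in *.
  assert (HX : 0 <= X) by apply sqrt_pos.
  set (s := s_of N tau beta x).
  assert (Hs2 : s ^ 2 = beta ^ 2 * Rr ^ 2 - X ^ 2) by (apply pow2_sqrt; nra).
  assert (Hs0 : 0 <= s) by apply sqrt_pos.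
  assert (Hss : s ^ 2 < Rr ^ 2).
  { rewrite Hs2. assert (0 < (1 - beta ^ 2) * Rr ^ 2) by (apply Rmult_lt_0_compat; nra). nra. }
  assert (Hs : 0 <= s < Rr).
  { split; auto. destruct (Rlt_dec s Rr) as [?|Hn']; auto. assert (Rr * Rr <= s * s) by nra. nra. }
  assert (Hmu : mu N tau beta x = / Wal (S m) * (2 / Rr ^ S m * RInt (fun y => y ^ 2 * pp s y ^ m) 0 s)).
  { rewrite <- (Ptot Rr s m HR Hs).
    unfold mu. fold Rr. fold s.
    rewrite <- (RInt_scal (V:=R_CompleteNormedModule)).
    - apply RInt_ext. rewrite Rmin_left, Rmax_right by lra. intros r Hr.
      unfold h, gamma, theta. cbv zeta. fold Rr. fold s.
      rewrite acos_atan by (apply (uu_pos Rr s r HR Hs); lra).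
      change (N - 2)%nat with (S m). unfold Wal, Af, th, uu. set (A := RInt _ 0 (atan _)). set (B := RInt _ 0 PI). transitivity (/ B * (r * A)); [match goal with |- ?u = ?v => change (@eq R u v) end; unfold Rdiv; ring| reflexivity].
    - apply ex_RInt_continuous. rewrite Rmin_left, Rmax_right by lra. intros r Hr.
      apply cont_f; auto; lra. }
  assert (Hmain : mu_main N tau beta x = beta ^ m / sqrt (PI * tau) * (/ (beta * Rr) ^ m * RInt (fun y => y ^ 2 * pp s y ^ m) 0 s)).
  { unfold mu_main. fold Rr X s. replace (N - 3)%nat with m by (unfold N; lia). f_equal.
    transitivity (RInt (fun y => / (beta * Rr) ^ m * (y ^ 2 * pp s y ^ m)) 0 s).
    - apply RInt_ext. rewrite Rmin_left, Rmax_right by lra. intros y Hy.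

      assert (E : 1 - (y ^ 2 + X ^ 2) / (2 * INR N * beta ^ 2 * tau) = (pp s y / (beta * Rr)) ^ 2).
      { unfold pp. unfold Rdiv. rewrite Rpow_mult_distr, pow2_sqrt by nra.
        replace (2 * INR N * beta ^ 2 * tau) with (beta ^ 2 * Rr ^ 2) by (rewrite HR2; ring). rewrite Hs2. field. split; lra. }
      rewrite E, sqrt_pow2.
      + unfold Rdiv. rewrite Rpow_mult_distr, pow_inv. match goal with |- ?u = ?v => change (@eq R u v) end; ring.
      + apply Rmult_le_pos. apply sqrt_pos. left; apply Rinv_0_lt_compat; nra.
    - apply (RInt_scal (V:=R_CompleteNormedModule) (fun y => y ^ 2 * pp s y ^ m)). apply ex_RInt_cont. intros; apply cont_y2pp. }
  set (a := 2 * sqrt (PI * tau) / Rr).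
  assert (HPI := PI_RGT_0).
  assert (Hsq : 0 < sqrt (PI * tau)) by (apply sqrt_lt_R0; nra).
  assert (Ha : 0 < a) by (unfold a; apply Rdiv_lt_0_compat; lra).
  assert (Ha2 : a ^ 2 * (INR m + 3) = 2 * PI).
  { unfold a. unfold Rdiv. rewrite Rpow_mult_distr, Rpow_mult_distr, pow2_sqrt by nra.
    rewrite pow_inv, HR2, HNr. field. split; lra. }
  destruct (wallis_bound m a Ha Ha2) as [Wp Hb2].
  exists (a / Wal (S m) - 1). split.
  - rewrite HNr. exact Hb2.
  - rewrite Hmu, Hmain. unfold a. rewrite Rpow_mult_distr. simpl pow.
    field. repeat split; try lra; apply pow_nonzero; lra.
Qed.
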